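(* Let $m\geq 15$ and $k\geq 1$ be integers and let $c(x)=1+\sum_{j\in\{1,2,3,7\}}(x^j+x^{m-j})\in\mathbb{F}_2[x]$. Then $\gcd(c(x^k),x^m-1)=1$ if and only if $\gcd(m,3k)=\gcd(m,5k)=\gcd(m,7k)=\gcd(m,k)$.
   Context: All polynomials are over $\mathbb{F}_2$. *)

(* Defs.v *)
From HB Require Import structures.
From mathcomp Require Import all_boot all_order all_algebra.
Set Implicit Arguments. Unset Strict Implicit. Unset Printing Implicit Defensive.
Import GRing.Theory.
Local Open Scope ring_scope.

Definition cpoly (m : nat) : {poly 'F_2} :=
  1 + \sum_(j <- [:: 1%N; 2%N; 3%N; 7%N]) ('X^j + 'X^(m - j)).

(* Main.v *)
Require Import Defs.
From HB Require Import structures.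
From mathcomp Require Import all_boot all_order all_algebra.
From mathcomp Require Import ring zify.
Import GRing.Theory.
Local Open Scope ring_scope.

Notation P2 := {poly 'F_2}.

Lemma two0 : (2%:R : P2) = 0.
Proof. rewrite -polyC_natr. have -> : (2%:R : 'F_2) = 0 by apply/eqP. by rewrite polyC0. Qed.

Lemma char2 (a b c : P2) : a = b + 2%:R * c -> a = b.
Proof. by move->; rewrite two0 mul0r addr0. Qed.

Lemma dvd_Xn (a b : nat) : (a %| b)%N -> ('X^a - 1 : P2) %| 'X^b - 1.
Proof.
move=> /dvdnP [c ->]; rewrite mulnC exprM [X in _ %| X]subrX1; exact: dvdp_mulIl.
Qed.

Arguments dvd_Xn {a b}.

Lemma dvd_gcdX (d : P2) (a b : nat) : (0 < a)%N ->
  d %| 'X^a - 1 -> d %| 'X^b - 1 -> d %| 'X^(gcdn a b) - 1.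
Proof.
move=> a0 da db; case: (egcdnP b a0) => km kn def _.
have -> : ('X^(gcdn a b) - 1 : P2) =
   ('X^(km * a) - 1) - 'X^(gcdn a b) * ('X^(kn * b) - 1).
  rewrite def exprD; ring.
apply: dvdp_sub; first exact: (@dvdp_trans _ ('X^a - 1) _ _ da (dvd_Xn (dvdn_mull _ (dvdnn _)))).
apply: dvdp_mull; exact: (@dvdp_trans _ ('X^b - 1) _ _ db (dvd_Xn (dvdn_mull _ (dvdnn _)))).
Qed.

Arguments dvd_gcdX {d a b}.

Lemma Xn1_neq0 (n : nat) : (0 < n)%N -> ('X^n - 1 : P2) != 0.
Proof. by move=> n0; rewrite -size_poly_eq0 size_Xn_sub_1. Qed.

Arguments Xn1_neq0 {n}.

Lemma key (p : nat) (F R : P2 -> P2) (m k : nat) : (0 < m)%N -> (0 < k)%N ->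
  (forall y, (y - 1) * F y = y ^+ p - 1) ->
  (forall y, F y = R y * (y - 1) + 1) ->
  coprimep (F 'X^k) ('X^m - 1) <-> gcdn m (p * k) = gcdn m k.
Proof.
move=> m0 k0 hF hR.
have cop1 : coprimep ('X^k - 1) (F 'X^k) by rewrite hR coprimep_addl_mul coprimep1.
have hpk : ('X^k - 1) * F 'X^k = 'X^(p * k) - 1 by rewrite hF -exprM mulnC.
split.
- move=> cop.
  have dGm : 'X^(gcdn m (p * k)) - 1 %| ('X^m - 1 : P2) by apply: dvd_Xn; exact: dvdn_gcdl.
  have dGp : 'X^(gcdn m (p * k)) - 1 %| ('X^k - 1) * F 'X^k.
    by rewrite hpk; apply: dvd_Xn; exact: dvdn_gcdr.
  have cG : coprimep ('X^(gcdn m (p * k)) - 1) (F 'X^k).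
    by rewrite coprimep_sym; exact: coprimep_dvdl dGm cop.
  rewrite (Gauss_dvdpl _ cG) in dGp.
  have g0 : (0 < gcdn m k)%N by rewrite gcdn_gt0 m0.
  have := dvd_gcdX m0 dGm dGp => /(dvdp_leq (Xn1_neq0 g0)).
  rewrite !size_Xn_sub_1 ?gcdn_gt0 ?m0 // ltnS => le1.
  apply/eqP; rewrite eqn_leq le1 /=.
  apply: dvdn_leq; first by rewrite gcdn_gt0 m0.
  by rewrite dvdn_gcd dvdn_gcdl /= (dvdn_trans (dvdn_gcdr _ _)) // dvdn_mull.
- move=> eqG; apply/coprimepP => d dF dB.
  have d1 : d %| 'X^(p * k) - 1 by rewrite -hpk; exact: dvdp_mull.
  have := dvd_gcdX m0 dB d1; rewrite eqG => dg.
  have dk : d %| 'X^k - 1 by exact: (@dvdp_trans _ ('X^(gcdn m k) - 1) _ _ dg (dvd_Xn (dvdn_gcdr _ _))).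
  by move/coprimepP: cop1; apply.
Qed.

Theorem proposition7 (m k : nat) (hm : (15 <= m)%N) (hk : (1 <= k)%N) :
  coprimep (cpoly m \Po 'X^k) ('X^m - 1) <->
  [/\ gcdn m (3 * k) = gcdn m k, gcdn m (5 * k) = gcdn m k
    & gcdn m (7 * k) = gcdn m k].
Proof.
have m0 : (0 < m)%N by apply: leq_trans hm.
set y : P2 := 'X^k.
have comp : cpoly m \Po y = 1 + (y + y ^+ (m - 1)) + ((y ^+ 2 + y ^+ (m - 2)) +
   ((y ^+ 3 + y ^+ (m - 3)) + ((y ^+ 7 + y ^+ (m - 7)) + 0))).
  rewrite /cpoly !big_cons big_nil !comp_polyD !comp_Xn_poly comp_poly0.
  by rewrite -polyC1 comp_polyC polyC1 expr1 addrA.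
set w := y ^+ (m - 7).
have e1 : y ^+ (m - 1) = w * y ^+ 6 by rewrite -exprD; congr (_ ^+ _); lia.
have e2 : y ^+ (m - 2) = w * y ^+ 5 by rewrite -exprD; congr (_ ^+ _); lia.
have e3 : y ^+ (m - 3) = w * y ^+ 4 by rewrite -exprD; congr (_ ^+ _); lia.
have ewm : w * y ^+ 7 = 'X^(m * k) by rewrite -exprD subnK; [rewrite /y -exprM mulnC | lia].
have [S hS] : exists S, 'X^(m * k) - 1 = S * ('X^m - 1 : P2).
  by apply/dvdpP; apply: dvd_Xn; exact: dvdn_mulr.
pose F3 (z : P2) := 1 + z + z ^+ 2.
pose F5 (z : P2) := 1 + z + z ^+ 2 + z ^+ 3 + z ^+ 4.
pose F7 (z : P2) := 1 + z + z ^+ 2 + z ^+ 3 + z ^+ 4 + z ^+ 5 + z ^+ 6.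
have ey : y ^+ 7 * (cpoly m \Po y) =
   ((y ^+ 6 + y ^+ 5 + y ^+ 4 + 1) * S) * ('X^m - 1) + F3 y * F3 y * F5 y * F7 y.
  rewrite -mulrA -hS -ewm comp e1 e2 e3 /F3 /F5 /F7.
  apply: (@char2 _ _ (- (2%:R * y + 5%:R * y ^+ 2 + 9%:R * y ^+ 3 + 13%:R * y ^+ 4
     + 17%:R * y ^+ 5 + 20%:R * y ^+ 6 + 21%:R * y ^+ 7 + 20%:R * y ^+ 8
     + 17%:R * y ^+ 9 + 13%:R * y ^+ 10 + 9%:R * y ^+ 11 + 5%:R * y ^+ 12
     + 2%:R * y ^+ 13))).
rewrite -/w.   ring.
have cy : coprimep (y ^+ 7) ('X^m - 1).
  rewrite /y -exprM coprimep_pexpl ?muln_gt0 ?hk // coprimep_sym coprimepX.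
  by rewrite rootE !hornerE expr0n eqn0Ngt m0 /=.
have -> : coprimep (cpoly m \Po y) ('X^m - 1) =
   coprimep (F3 y * F3 y * F5 y * F7 y) ('X^m - 1).
  by rewrite -(andTb (coprimep (cpoly m \Po y) _)) -cy -coprimepMl ey
     coprimep_sym coprimep_addl_mul coprimep_sym.
rewrite !coprimepMl andbb.
have hF3 : forall z : P2, (z - 1) * F3 z = z ^+ 3 - 1 by move=> z; rewrite /F3; ring.
have hF5 : forall z : P2, (z - 1) * F5 z = z ^+ 5 - 1 by move=> z; rewrite /F5; ring.
have hF7 : forall z : P2, (z - 1) * F7 z = z ^+ 7 - 1 by move=> z; rewrite /F7; ring.
have hR3 : forall z : P2, F3 z = z * (z - 1) + 1.
  by move=> z; apply: (@char2 _ _ z); rewrite /F3; ring.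
have hR5 : forall z : P2, F5 z = (z ^+ 3 + z) * (z - 1) + 1.
  by move=> z; apply: (@char2 _ _ (z ^+ 3 + z)); rewrite /F5; ring.
have hR7 : forall z : P2, F7 z = (z ^+ 5 + z ^+ 3 + z) * (z - 1) + 1.
  by move=> z; apply: (@char2 _ _ (z ^+ 5 + z ^+ 3 + z)); rewrite /F7; ring.
have k3 := @key 3 F3 (fun z => z) m k m0 hk hF3 hR3.
have k5 := @key 5 F5 (fun z => z ^+ 3 + z) m k m0 hk hF5 hR5.
have k7 := @key 7 F7 (fun z => z ^+ 5 + z ^+ 3 + z) m k m0 hk hF7 hR7.
split.
- by case/andP => /andP [/k3 ? /k5 ?] /k7 ?.
- by case=> /k3 -> /k5 -> /k7 ->.
Qed.
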